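(* Let $G=(V,E)$ be a graph with no isolated vertices and maximum degree $\Delta$, and let $m\ge1$ be an integer. The greedy algorithm applied to $U=V$ and the function $f(A)=\sum_{v\in V}m_A(v)$ returns a fault-tolerant total dominating set $S$ (with parameter $m$) satisfying $|S|\le\big(1+\ln(\Delta+m-1)\big)\cdot|S^*|$, where $S^*$ is a minimum-cardinality fault-tolerant total dominating set of $G$.
   Context: $N(v)$ is the neighborhood of $v$, $N_C(v)=N(v)\cap C$. $m_A(v)=m$ if [$v\notin A$ and $|N_A(v)|\ge m$] or [$v\in A$ and $|N_A(v)|>0$]; $m_A(v)=m-1$ if $v\in A$ and $|N_A(v)|=0$; $m_A(v)=|N_A(v)|$ otherwise. $\Delta_x f(A)=f(A\cup\{x\})-f(A)$. The greedy algorithm: start with $S=\emptyset$; while some $u\in U\setminus S$ has $\Delta_u f(S)>0$, pick $x\in U\setminus S$ maximizing $\Delta_u f(S)$ (ties arbitrary) and add it to $S$; return $S$. A fault-tolerant total dominating set with parameter $m$ is a set $S\subseteq V$ such that every $v\in V\setminus S$ has at least $m$ neighbors in $S$ and every $v\in S$ has at least one neighbor in $S$. *)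

(* Defs.v *)
From mathcomp Require Import all_boot all_order all_algebra.
From Stdlib Require Import Reals.
Set Implicit Arguments. Unset Strict Implicit. Unset Printing Implicit Defensive.
Import GRing.Theory Num.Theory.

Section Defs.
Variables (V : finType) (e : rel V) (m : nat).

Definition nbhd (v : V) : {set V} := [set w | e v w].
Definition nbhd_in (A : {set V}) (v : V) : {set V} := nbhd v :&: A.

Definition deg (v : V) : nat := #|nbhd v|.
Definition max_degree : nat := (\max_(v : V) deg v)%N.

Definition no_isolated : Prop := forall v : V, (0 < deg v)%N.

Definition mA (A : {set V}) (v : V) : nat :=
  if ((v \notin A) && (m <= #|nbhd_in A v|)%N) || ((v \in A) && (0 < #|nbhd_in A v|)%N)
  then m
  else if (v \in A) && (#|nbhd_in A v| == 0%N) then m.-1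
  else #|nbhd_in A v|.

Definition fval (A : {set V}) : nat := (\sum_(v : V) mA A v)%N.

Definition gain (A : {set V}) (x : V) : int :=
  GRing.add (Posz (fval (x |: A))) (GRing.opp (Posz (fval A))).

Definition has_positive_gain (S : {set V}) : Prop :=
  exists u, u \notin S /\ Order.lt (0 : int) (gain S u).

Definition greedy_step (S S' : {set V}) : Prop :=
  has_positive_gain S /\
  exists x, [/\ x \notin S,
                (forall u, u \notin S -> Order.le (gain S u) (gain S x))
              & S' = x |: S].

Inductive greedy_reach : {set V} -> Prop :=
  | greedy_start : greedy_reach set0
  | greedy_next S S' : greedy_reach S -> greedy_step S S' -> greedy_reach S'.

(* S is a possible return value of the greedy algorithm
   (some run with some tie-breaking reaches S and the loop stops) *)
Definition greedy_output (S : {set V}) : Prop :=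
  greedy_reach S /\ ~ has_positive_gain S.

Definition ftds (S : {set V}) : Prop :=
  (forall v, v \notin S -> (m <= #|nbhd_in S v|)%N) /\
  (forall v, v \in S -> (0 < #|nbhd_in S v|)%N).

Definition min_ftds (S : {set V}) : Prop :=
  ftds S /\ forall T, ftds T -> (#|S| <= #|T|)%N.

End Defs.

(* Main.v *)
Require Import Defs.
From mathcomp Require Import all_boot all_order all_algebra zify.
From Stdlib Require Import Reals Lra Classical ZArith.
Import ssrnat.
Set Implicit Arguments. Unset Strict Implicit. Unset Printing Implicit Defensive.

Definition cw (V : finType) (e : rel V) (m : nat) (u v : V) : nat :=
  (e v u : nat) + m.-1 * (u == v).
Definition wA (V : finType) (e : rel V) (m : nat) (A : {set V}) (v : V) : nat :=
  \sum_(u in A) cw e m u v.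

Lemma card_nbhd_in (V : finType) (e : rel V) (A : {set V}) v :
  #|nbhd_in e A v| = \sum_(u in A) (e v u : nat).
Proof.
rewrite -sum1_card big_mkcond [RHS]big_mkcond /=.
apply: eq_bigr => u _; rewrite /nbhd_in /nbhd !inE.
by case: (e v u); case: (u \in A).
Qed.

Lemma card_nbhd (V : finType) (e : rel V) v :
  #|nbhd e v| = \sum_(u : V) (e v u : nat).
Proof.
rewrite -sum1_card big_mkcond /=.
by apply: eq_bigr => u _; rewrite /nbhd !inE; case: (e v u).
Qed.

Lemma sum_eqv (V : finType) (A : {set V}) v :
  \sum_(u in A) ((u == v) : nat) = (v \in A).
Proof.
case hv: (v \in A).
  rewrite (bigD1 v) //= eqxx big1 // => u /andP [_ /negbTE ->] //.
by rewrite big1 // => u uA; case: eqP => // E; rewrite -E uA in hv.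
Qed.

Lemma wA_eq (V : finType) (e : rel V) m (A : {set V}) v :
  wA e m A v = #|nbhd_in e A v| + m.-1 * (v \in A).
Proof.
rewrite /wA /cw big_split /= card_nbhd_in -sum_eqv big_distrr //.
Qed.

Lemma mA_min (V : finType) (e : rel V) m (A : {set V}) v : 1 <= m ->
  mA e m A v = minn (wA e m A v) m.
Proof.
move=> m1; rewrite wA_eq /mA.
set n := #|nbhd_in e A v|.
case: (v \in A) => /=; case: (ltnP 0 n) => h; case: (leqP m n) => h2 /=;
  rewrite ?muln1 ?muln0 ?addn0 ?eqn0Ngt ?h ?h2 /=; try lia.
by rewrite -leqNgt h; lia.
Qed.

Lemma fval_min (V : finType) (e : rel V) m (A : {set V}) : 1 <= m ->
  fval e m A = \sum_v minn (wA e m A v) m.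
Proof. by move=> m1; apply: eq_bigr => v _; rewrite mA_min. Qed.

Lemma wA_U1 (V : finType) (e : rel V) m (A : {set V}) y v : y \notin A ->
  wA e m (y |: A) v = cw e m y v + wA e m A v.
Proof. by move=> yA; rewrite /wA big_setU1. Qed.

Lemma wA_sub (V : finType) (e : rel V) m (A B : {set V}) v : A \subset B ->
  wA e m A v <= wA e m B v.
Proof.
move=> sAB; rewrite /wA [X in _ <= X](big_setID A) /=.
by rewrite (setIidPr sAB) leq_addr.
Qed.

Lemma fval_mono (V : finType) (e : rel V) m (A B : {set V}) : 1 <= m ->
  A \subset B -> fval e m A <= fval e m B.
Proof.
move=> m1 sAB; rewrite !fval_min //; apply: leq_sum => v _.
have := wA_sub e m v sAB; lia.
Qed.

Lemma fval_submod (V : finType) (e : rel V) m (A B : {set V}) y : 1 <= m ->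
  A \subset B -> fval e m (y |: B) + fval e m A <= fval e m (y |: A) + fval e m B.
Proof.
move=> m1 sAB; case yB: (y \in B).
  have -> : y |: B = B by apply/setUidPr; rewrite sub1set.
  by rewrite addnC leq_add2r fval_mono // subsetU1.
have yA : y \notin A by apply/negP => /(subsetP sAB); rewrite yB.
rewrite !fval_min // -!big_split /=; apply: leq_sum => v _.
rewrite !wA_U1 ?yB //.
have := wA_sub e m v sAB; lia.
Qed.

Definition gn (V : finType) (e : rel V) m (S : {set V}) u :=
  fval e m (u |: S) - fval e m S.

Lemma gainE (V : finType) (e : rel V) m (S : {set V}) u : 1 <= m ->
  gain e m S u = Posz (gn e m S u).
Proof.
by move=> m1; rewrite /gain /gn subzn // fval_mono // subsetUr.
Qed.

Lemma fval_sum (V : finType) (e : rel V) m (S T : {set V}) : 1 <= m ->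
  fval e m (S :|: T) <= fval e m S + \sum_(y in T) gn e m S y.
Proof.
move=> m1; move: {2}#|T|.+1 (ltnSn #|T|) => n; elim: n T => [|n IH] T //.
move=> hT; case: (set_0Vmem T) => [->|[y yT]].
  by rewrite setU0 big_set0 addn0.
rewrite (big_setD1 y) //=.
have -> : S :|: T = y |: (S :|: (T :\ y)) by rewrite setUCA setD1K.
have h1 := fval_submod e y m1 (subsetUl S (T :\ y)).
have h2 : fval e m S <= fval e m (y |: S) by rewrite fval_mono // subsetUr.
have h3 := IH (T :\ y).
have : #|T :\ y| < n.
  by move: hT; rewrite (cardsD1 y T) yT /= add1n ltnS.
move/h3 => h4.
move: h1 h2 h4; rewrite /gn; lia.
Qed.

Definition Fm (V : finType) (m : nat) := \sum_(v : V) m.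

Lemma fval_le_Fm (V : finType) (e : rel V) m (A : {set V}) : 1 <= m ->
  fval e m A <= Fm V m.
Proof. by move=> m1; rewrite fval_min //; apply: leq_sum => v _; apply: geq_minr. Qed.

Lemma sum_eq_pw (V : finType) (F G : V -> nat) :
  (forall i, F i <= G i) -> \sum_i F i = \sum_i G i -> forall i, F i = G i.
Proof.
move=> le E i; apply/eqP; rewrite eqn_leq le /=; rewrite leqNgt; apply/negP => lt.
move: E; rewrite (bigD1 i) // [X in _ = X](bigD1 i) //= => E.
have : \sum_(j | j != i) F j <= \sum_(j | j != i) G j by apply: leq_sum.
lia.
Qed.

Lemma ftds_fval (V : finType) (e : rel V) m (A : {set V}) : 1 <= m ->
  ftds e m A -> fval e m A = Fm V m.
Proof.
move=> m1 [h1 h2]; rewrite fval_min //; apply: eq_bigr => v _.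
rewrite wA_eq; case vA: (v \in A).
  by have := h2 v vA; lia.
by have := h1 v (negbT vA); lia.
Qed.

Lemma fval_ftds (V : finType) (e : rel V) m (A : {set V}) : 1 <= m ->
  fval e m A = Fm V m -> ftds e m A.
Proof.
move=> m1; rewrite fval_min // => E.
have E' := sum_eq_pw (fun v => geq_minr (wA e m A v) m) E.
split => v vA; have := E' v; rewrite wA_eq ?(negbTE vA) ?vA; lia.
Qed.

Lemma fval_setT (V : finType) (e : rel V) m : 1 <= m -> no_isolated e ->
  fval e m setT = Fm V m.
Proof.
move=> m1 ni; apply: ftds_fval => //; split => v; rewrite ?inE // => _.
by rewrite /nbhd_in setIT; apply: ni.
Qed.

Lemma fval_set0 (V : finType) (e : rel V) m : fval e m (set0 : {set V}) = 0.
Proof.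
rewrite /fval big1 // => v _; rewrite /mA /nbhd_in setI0 cards0 inE /=.
by case: m.
Qed.

Lemma gn_in (V : finType) (e : rel V) m (S : {set V}) y : y \in S -> gn e m S y = 0.
Proof.
move=> yS; rewrite /gn.
have -> : y |: S = S by apply/setUidPr; rewrite sub1set.
by rewrite subnn.
Qed.

Lemma resid_bound (V : finType) (e : rel V) m (S T : {set V}) th : 1 <= m ->
  ftds e m T -> (forall u, u \notin S -> gn e m S u <= th) ->
  Fm V m <= fval e m S + #|T| * th.
Proof.
move=> m1 fT hth.
have h1 := ftds_fval m1 fT.
have h2 : fval e m T <= fval e m (S :|: T) by rewrite fval_mono // subsetUr.
have h3 := fval_sum e S T m1.
have h4 : \sum_(y in T) gn e m S y <= \sum_(y in T) th.
  apply: leq_sum => y _; case yS: (y \in S); first by rewrite gn_in.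
  by apply: hth; rewrite yS.
move: h4; rewrite sum_nat_const; lia.
Qed.

Lemma gn0_bound (V : finType) (e : rel V) m (y : V) : 1 <= m -> symmetric e ->
  gn e m set0 y <= max_degree e + m - 1.
Proof.
move=> m1 sym; rewrite /gn fval_set0 subn0 fval_min //.
have -> : \sum_v minn (wA e m (y |: set0) v) m = \sum_v minn (cw e m y v) m.
  by apply: eq_bigr => v _; rewrite wA_U1 ?inE // /wA big_set0 addn0.
apply: (@leq_trans (\sum_v cw e m y v)); first by apply: leq_sum => v _; apply: geq_minl.
rewrite /cw big_split /= -big_distrr /=.
have -> : \sum_(v : V) ((y == v) : nat) = 1.
  by rewrite (bigD1 y) //= eqxx big1 // => v /negbTE; rewrite eq_sym => ->.
have : \sum_(v : V) (e v y : nat) <= max_degree e.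
  have -> : \sum_(v : V) (e v y : nat) = deg e y.
    by rewrite /deg card_nbhd; apply: eq_bigr => v _; rewrite sym.
  exact: leq_bigmax.
lia.
Qed.

Lemma r0_bound (V : finType) (e : rel V) m (T : {set V}) : 1 <= m -> symmetric e ->
  ftds e m T -> Fm V m <= #|T| * (max_degree e + m - 1).
Proof.
move=> m1 sym fT.
have h1 := ftds_fval m1 fT.
have h3 := fval_sum e set0 T m1.
rewrite set0U fval_set0 add0n in h3.
have h4 : \sum_(y in T) gn e m set0 y <= \sum_(y in T) (max_degree e + m - 1).
  by apply: leq_sum => y _; apply: gn0_bound.
move: h4; rewrite sum_nat_const; lia.
Qed.

Lemma step_info (V : finType) (e : rel V) m (S S' : {set V}) : 1 <= m ->
  greedy_step e m S S' ->
  exists x, [/\ x \notin S, S' = x |: S, 0 < gn e m S x &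
             forall u, u \notin S -> gn e m S u <= gn e m S x].
Proof.
move=> m1 [[u [uS gu]] [x [xS hx ->]]].
exists x; split => //.
  by have := hx u uS; move: gu; rewrite !gainE // ltz_nat lez_nat; lia.
by move=> w wS; have := hx w wS; rewrite !gainE // lez_nat.
Qed.

Lemma greedy_inv (V : finType) (e : rel V) m (T S : {set V}) : 1 <= m ->
  ftds e m T -> greedy_reach e m S ->
  (Fm V m - fval e m S) * #|T| ^ #|S| <= Fm V m * (#|T| - 1) ^ #|S| /\
  forall t, t <= #|S| -> exists R, R * #|T| ^ t <= Fm V m * (#|T| - 1) ^ t /\
     #|S| - t + (Fm V m - fval e m S) <= R.
Proof.
move=> m1 fT; elim => [|S0 S1 _ [IH1 IH2] st].
  rewrite cards0 fval_set0 !expn0 !muln1 subn0; split => // t.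
  by rewrite leqn0 => /eqP ->; exists (Fm V m); rewrite !expn0 !muln1.
have [x [xS -> gx hmax]] := step_info m1 st.
set s := #|T|.
have hc : #|x |: S0| = #|S0|.+1 by rewrite cardsU1 xS.
have hr := resid_bound m1 fT hmax.
have hle := fval_le_Fm e (x |: S0) m1.
have hmo : fval e m S0 <= fval e m (x |: S0) by rewrite fval_mono // subsetUr.
set th := gn e m S0 x in gx hr.
have Eth : fval e m (x |: S0) = fval e m S0 + th by rewrite /th /gn; lia.
set a := Fm V m - fval e m S0 in IH1 IH2.
set a' := Fm V m - fval e m (x |: S0).
have Ea : a = a' + th by rewrite /a /a'; lia.
have hsa : a <= s * th by rewrite /a; lia.
have key : a' * s <= a * (s - 1).
  rewrite mulnBr muln1 Ea mulnDl [th * s]mulnC.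
  move: hsa; rewrite Ea; lia.
have P1 : a' * s ^ #|x |: S0| <= Fm V m * (s - 1) ^ #|x |: S0|.
  rewrite hc !expnS mulnA.
  apply: leq_trans (leq_mul key (leqnn _)) _.
  rewrite mulnAC.
  have -> : Fm V m * ((s - 1) * (s - 1) ^ #|S0|) = Fm V m * (s - 1) ^ #|S0| * (s - 1).
    by rewrite mulnCA mulnC.
  exact: leq_mul IH1 (leqnn _).
split => // t; rewrite hc leq_eqVlt => /orP [/eqP ->|].
  by exists a'; rewrite -hc P1 subnn.
rewrite ltnS => /IH2 [R [h1 h2]]; exists R; split => //.
move: h2; rewrite Ea; lia.
Qed.

Lemma greedy_exists (V : finType) (e : rel V) m : 1 <= m ->
  exists S, greedy_output e m S.
Proof.
move=> m1.
suff H : forall n (S : {set V}), greedy_reach e m S -> #|~: S| <= n ->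
  exists S', greedy_output e m S'.
  by apply: (H #|V| set0); [constructor | rewrite max_card].
elim => [|n IH] S rS hn.
  exists S; split => //; move=> [u [uS _]].
  by move: hn; rewrite leqn0 cards_eq0 => /eqP E; move: uS; rewrite -in_setC E inE.
case: (classic (has_positive_gain e m S)) => hp; last by exists S.
have [u0 [u0S _]] := hp.
case: (@arg_maxnP _ u0 (fun x => x \notin S) (gn e m S) u0S) => x xS hx.
apply: (IH (x |: S)).
  apply: (greedy_next rS); split => //; exists x; split => //.
  by move=> u uS; rewrite !gainE // lez_nat; apply: hx.
have c1 := cardsC S; have c2 := cardsC (x |: S).
move: c2; rewrite cardsU1 xS /=; move: hn c1 => a b c. rewrite -b in c. lia.
Qed.

Lemma INR_muln (a b : nat) : INR (a * b) = (INR a * INR b)%R.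
Proof. by rewrite -multE mult_INR. Qed.

Lemma INR_expn (a n : nat) : INR (a ^ n) = (INR a ^ n)%R.
Proof.
elim: n => [|n IH]; first by rewrite expn0.
by rewrite expnS INR_muln IH /=.
Qed.

Lemma INR_leq (a b : nat) : a <= b -> (INR a <= INR b)%R.
Proof. by move/leP; apply: le_INR. Qed.

Lemma exp_pow' (x : R) (n : nat) : (exp x ^ n = exp (INR n * x))%R.
Proof.
elim: n => [|n IH]; first by rewrite /= Rmult_0_l exp_0.
rewrite S_INR /= IH -exp_plus; congr exp; ring.
Qed.

Lemma real_final (k s D r0 : nat) : 1 <= s -> 1 <= D -> r0 <= s * D ->
  (forall t, t <= k -> exists R, R * s ^ t <= r0 * (s - 1) ^ t /\ k - t <= R) ->
  (INR k <= (1 + ln (INR D)) * INR s)%R.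
Proof.
move=> s1 D1 hr0 H.
have Ds : (1 <= INR D)%R by have := INR_leq D1.
have Ss : (1 <= INR s)%R by have := INR_leq s1.
have lnD : (0 <= ln (INR D))%R.
  case: (Rle_lt_or_eq_dec _ _ Ds) => h; last by rewrite -h ln_1; lra.
  rewrite -ln_1; apply: Rlt_le; apply: ln_increasing => //; lra.
set L := (INR s * ln (INR D))%R.
have L0 : (0 <= L)%R by apply: Rmult_le_pos; lra.
have [hz1 hz2] := archimed L.
set z := up L in hz1 hz2.
have z0 : (0 <= z)%Z.
  apply: Z.lt_le_incl; apply: lt_IZR; lra.
set t := Z.to_nat z.
have Et : INR t = IZR z by rewrite INR_IZR_INZ /t Z2Nat.id.
have ht1 : (L < INR t)%R by rewrite Et; lra.
have ht2 : (INR t <= L + 1)%R by rewrite Et; lra.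
have goalE : ((1 + ln (INR D)) * INR s = INR s + L)%R by rewrite /L; ring.
rewrite goalE.
case: (ltnP k t) => hkt.
  have := INR_leq hkt; rewrite S_INR; lra.
have [R [hR1 hR2]] := H t hkt.
suff Rs : R < s.
  have : k.+1 <= t + s by lia.
  move/INR_leq; rewrite S_INR plus_INR; lra.
rewrite ltnNge; apply/negP => sR.
have h1 : s * s ^ t <= s * (D * (s - 1) ^ t).
  apply: (leq_trans (leq_mul sR (leqnn _))).
  apply: (leq_trans hR1); rewrite mulnA; exact: leq_mul hr0 (leqnn _).
rewrite leq_pmul2l // in h1.
move/INR_leq: h1; rewrite INR_muln !INR_expn.
have -> : INR (s - 1) = (INR s - 1)%R by rewrite -minusE minus_INR; [rewrite INR_1 | apply/leP].
move=> h1.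
have e1 : (INR s - 1 <= INR s * exp (- / INR s))%R.
  have := exp_ineq1_le (- / INR s).
  have : (INR s * / INR s = 1)%R by field; lra.
  move=> hs hx.
  have := Rmult_le_compat_l (INR s) _ _ (ltac:(lra) : (0 <= INR s)%R) hx.
  rewrite Rmult_plus_distr_l Rmult_1_r. lra.
have e2 : ((INR s - 1) ^ t <= INR s ^ t * exp (- / INR s * INR t))%R.
  rewrite (Rmult_comm (- / INR s)) -exp_pow' -Rpow_mult_distr; apply: pow_incr; lra.
have e3 : (exp (- / INR s * INR t) < / INR D)%R.
  rewrite -(exp_ln (INR D)); last lra.
  rewrite -exp_Ropp; apply: exp_increasing.
  have : (ln (INR D) = L * / INR s)%R by rewrite /L; field; lra.
  move=> ->.
  have : (0 < / INR s)%R by apply: Rinv_0_lt_compat; lra.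
  move=> hi.
  have := Rmult_lt_compat_r (/ INR s) _ _ hi ht1. lra.
have hst : (0 < INR s ^ t)%R by apply: pow_lt; lra.
have e4 : (INR D * (INR s - 1) ^ t < INR s ^ t)%R.
  apply: (Rle_lt_trans _ (INR D * (INR s ^ t * exp (- / INR s * INR t)))).
    by apply: Rmult_le_compat_l; lra.
  have : (INR D * / INR D = 1)%R by field; lra.
  move=> hD.
  have := Rmult_lt_compat_l (INR D * INR s ^ t) _ _ ltac:(apply: Rmult_lt_0_compat; lra) e3.
  nra.
lra.
Qed.

Theorem mainTheorem10 (V : finType) (e : rel V) (m : nat) :
  symmetric e -> irreflexive e ->
  no_isolated e -> 1 <= m ->
  (exists S, greedy_output e m S) /\
  forall S : {set V}, greedy_output e m S ->
    ftds e m S /\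
    forall Sstar : {set V}, min_ftds e m Sstar ->
      (INR #|S| <= (1 + ln (INR (max_degree e + m - 1))) * INR #|Sstar|)%R.
Proof.
move=> sym irr ni m1; split; first exact: greedy_exists.
move=> S [rS hng].
have fT : ftds e m setT by apply: fval_ftds => //; apply: fval_setT.
have hS : fval e m S = Fm V m.
  apply/eqP; rewrite eqn_leq fval_le_Fm //=.
  have := @resid_bound V e m S setT 0 m1 fT.
  rewrite muln0 addn0; apply => u uS.
  rewrite leqn0; apply/negPn/negP => hu; apply: hng; exists u; split => //.
  by rewrite gainE // ltz_nat lt0n.
have fS := fval_ftds m1 hS.
split => // Sstar [fSs _].
case: (posnP #|Sstar|) => hs.
  have V0 : forall v : V, False.
    move=> v; case: fSs => h _.
    have := h v; rewrite (cards0_eq hs) inE /= => /(_ isT).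
    by rewrite /nbhd_in setI0 cards0 leqn0 => /eqP m0; rewrite m0 in m1.
  have -> : #|S| = 0 by apply: eq_card0 => v; case: (V0 v).
  rewrite hs /=; lra.
have [y yS] : exists y, y \in Sstar by apply/set0Pn; rewrite -card_gt0.
have D1 : 1 <= max_degree e + m - 1.
  have := ni y; have := @leq_bigmax _ (deg e) y; rewrite /max_degree; lia.
apply: (@real_final #|S| #|Sstar| _ (Fm V m)) => //.
  exact: r0_bound.
move=> t ht; have [_ H] := greedy_inv m1 fSs rS.
have [R [h1 h2]] := H t ht; exists R; split => //.
by move: h2; rewrite hS subnn addn0.
Qed.
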